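(* Let $(S,\le)$ be a continuous dcwo. For any Scott-closed subset $F$ of $S$, the set $\operatorname{Max}F$ of maximal elements of $F$ is finite and $F=\downarrow\operatorname{Max}F$.
   Context: A continuous dcwo is a partial order $(S,\le)$ which is well (well-founded, no infinite antichain), a dcpo (every directed subset $D$, i.e. nonempty with pairwise upper bounds in $D$, has a least upper bound), and continuous (for every $x$, $\{y\mid y\ll x\}$ is directed with lub $x$, where $y\ll x$ iff every directed $D$ with $x\le\bigvee D$ contains an element $z\ge y$). A set is Scott-open if it is upward-closed and meets every directed set whose lub it contains; Scott-closed sets are complements of Scott-open sets. *)

(* Defs.v *)
From Stdlib Require Import List.

Section Dcwo.
Context {S : Type} (le : S -> S -> Prop).

Definition is_partial_order : Prop :=
  (forall x, le x x) /\
  (forall x y, le x y -> le y x -> x = y) /\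
  (forall x y z, le x y -> le y z -> le x z).

Definition lt_of (x y : S) : Prop := le x y /\ x <> y.

Definition finite_set (A : S -> Prop) : Prop :=
  exists l : list S, forall x, A x -> In x l.

Definition antichain (A : S -> Prop) : Prop :=
  forall x y, A x -> A y -> le x y -> x = y.

Definition well_order_po : Prop :=
  well_founded lt_of /\ (forall A, antichain A -> finite_set A).

Definition directed (D : S -> Prop) : Prop :=
  (exists x, D x) /\
  (forall x y, D x -> D y -> exists z, D z /\ le x z /\ le y z).

Definition is_lub (D : S -> Prop) (s : S) : Prop :=
  (forall d, D d -> le d s) /\ (forall u, (forall d, D d -> le d u) -> le s u).

Definition dcpo : Prop :=
  forall D, directed D -> exists s, is_lub D s.

Definition way_below (y x : S) : Prop :=
  forall D s, directed D -> is_lub D s -> le x s -> exists z, D z /\ le y z.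

Definition continuous_po : Prop :=
  forall x, directed (fun y => way_below y x) /\ is_lub (fun y => way_below y x) x.

Definition continuous_dcwo : Prop :=
  is_partial_order /\ well_order_po /\ dcpo /\ continuous_po.

Definition scott_open (U : S -> Prop) : Prop :=
  (forall x y, U x -> le x y -> U y) /\
  (forall D s, directed D -> is_lub D s -> U s -> exists d, D d /\ U d).

Definition scott_closed (F : S -> Prop) : Prop :=
  scott_open (fun x => ~ F x).

Definition MaxSet (F : S -> Prop) : S -> Prop :=
  fun x => F x /\ forall y, F y -> le x y -> y = x.

Definition down_set (A : S -> Prop) : S -> Prop :=
  fun x => exists m, A m /\ le x m.

End Dcwo.

(* Main.v *)
Require Import Defs.
From Stdlib Require Import List Classical.
From mathcomp Require Import ssreflect ssrfun ssrbool.
From mathcomp Require Import boolp classical_sets.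

Lemma maxabove (S : Type) (le : S -> S -> Prop)
  (HS : continuous_dcwo le) (F : S -> Prop) (HF : scott_closed le F) x :
  F x -> exists m, MaxSet le F m /\ le x m.
Proof.
move=> Fx.
destruct HS as [[Hr [Ha Ht]] [_ [Hd _]]].
destruct HF as [_ Hsc].
pose T := {y : S | F y /\ le x y}.
pose R := fun (a b : T) => `[< le (proj1_sig a) (proj1_sig b) >].
have HR : forall a b, R a b <-> le (proj1_sig a) (proj1_sig b).
  by move=> a b; rewrite /R asboolE.
have [t Ht0] : exists t : T, forall s, R t s -> s = t.
  apply: Zorn.
  - by move=> a; apply/HR.
  - by move=> a b c /HR ? /HR ?; apply/HR; eauto.
  - move=> [a Pa] [b Pb] /HR /= ? /HR /= ?.
    have E : a = b by apply: Ha.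
    subst b; f_equal; apply: Prop_irrelevance.
  - move=> A Atot.
    destruct (Classical_Prop.classic (exists a, A a)) as [[a0 Aa0]|NA].
    + pose D := fun y => exists a, A a /\ proj1_sig a = y.
      have Ddir : directed le D.
        split; first by exists (proj1_sig a0); exists a0.
        move=> _ _ [a [Aa <-]] [b [Ab <-]].
        case: (Atot a b Aa Ab) => /HR H.
        * exists (proj1_sig b); split; [by exists b|split; auto].
        * exists (proj1_sig a); split; [by exists a|split; auto].
      have [s [Hs1 Hs2]] := Hd D Ddir.
      have Fs : F s.
        apply: Classical_Prop.NNPP => nFs.
        have [d [[a [_ <-]] nFd]] := Hsc D s Ddir (conj Hs1 Hs2) nFs.
        by apply: nFd; case: (proj2_sig a).
      have xs : le x s.
        apply: (Ht x (proj1_sig a0) s); first by case: (proj2_sig a0).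
        by apply: Hs1; exists a0.
      exists (exist _ s (conj Fs xs)) => a Aa; apply/HR => /=.
      by apply: Hs1; exists a.
    + exists (exist _ x (conj Fx (Hr x))) => a Aa.
      by exfalso; apply: NA; exists a.
exists (proj1_sig t); split; last by case: (proj2_sig t).
split; first by case: (proj2_sig t).
move=> y Fy ty.
have xy : le x y by apply: Ht ty; case: (proj2_sig t).
have := Ht0 (exist _ y (conj Fy xy)).
move=> H; have := H (proj2 (HR t (exist _ y (conj Fy xy))) ty).
by move=> <-.
Qed.

Theorem lemma3p5 (S : Type) (le : S -> S -> Prop)
  (HS : continuous_dcwo le) (F : S -> Prop) (HF : scott_closed le F) :
  finite_set (MaxSet le F) /\ (forall x, F x <-> down_set le (MaxSet le F) x).
Proof.
split.
- have [_ [[_ Hw] _]] := HS.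
  apply: Hw => a b [_ Ma] [Fb _] ab.
  by symmetry; apply: Ma.
- move=> x; split; first exact: maxabove.
  move=> [m [[Fm _] xm]].
  apply: Classical_Prop.NNPP => nFx.
  have [Hup _] := HF.
  by apply: (Hup x m nFx xm).
Qed.
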